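(* Let $x_0,\dots,x_d\in\mathbb{D}$ be distinct and $w_0,w_1\in\mathbb{C}^n$. Suppose there exists $\gamma>0$ such that $|x_0-x_1|\le\gamma$ and $\mathrm{dist}([x_0,x_1],\{x_2,\dots,x_d\})\ge2\gamma$, where $[x_0,x_1]$ is the real line segment from $x_0$ to $x_1$. Let $P$ be the unique $\mathbb{C}^n$-valued polynomial of degree at most $d$ with $P(x_0)=w_0$, $P(x_1)=w_1$, $P(x_j)=0$ for $2\le j\le d$. Then there exist constants $L_0,L_1$ depending only on $\gamma$ and $d$ such that $$\sup_{\zeta\in\mathbb{D}}\|P(\zeta)\|\le L_1\left\|\frac{w_1-w_0}{x_1-x_0}\right\|+L_0\|w_0\|.$$
   Context: $\mathbb{D}$ is the unit disk in $\mathbb{C}$ and $\|\cdot\|$ the Euclidean norm on $\mathbb{C}^n$. *)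

(* Defs.v *)
From mathcomp Require Import all_boot all_order all_algebra.
From mathcomp Require Import all_classical all_reals.
From mathcomp Require Export complex.
Set Implicit Arguments. Unset Strict Implicit. Unset Printing Implicit Defensive.
Import Order.TTheory GRing.Theory Num.Theory.
Local Open Scope ring_scope.

Definition cabs (R : rcfType) (z : R[i]) : R := Normc.normc z.

Definition vnorm (R : rcfType) (n : nat) (v : 'I_n -> R[i]) : R :=
  Num.sqrt (\sum_(i < n) cabs (v i) ^+ 2).

Definition in_disk (R : rcfType) (z : R[i]) : Prop := cabs z < 1.

Definition seg_pt (R : rcfType) (x0 x1 : R[i]) (t : R) : R[i] :=
  x0 + (t%:C)%C * (x1 - x0).

(* Main.v *)
Require Import Defs.
From mathcomp Require Import all_boot all_order all_algebra.
From mathcomp Require Import all_classical all_reals.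
From mathcomp Require Import complex.
From mathcomp Require Import ring lra zify.
Import Order.TTheory GRing.Theory Num.Theory.
Local Open Scope ring_scope.
Set Implicit Arguments.

Section Aux.
Variable R : rcfType.
Implicit Types x y z : R[i].

Lemma cabs_ge0 z : 0 <= cabs z.
Proof. by case: z => a b; rewrite /cabs /=; exact: sqrtr_ge0. Qed.
Lemma cabsM x y : cabs (x * y) = cabs x * cabs y.
Proof. exact: Normc.normcM. Qed.
Lemma cabsD x y : cabs (x + y) <= cabs x + cabs y.
Proof. exact: le_normcD. Qed.
Lemma cabsN x : cabs (- x) = cabs x.
Proof. exact: normcN. Qed.
Lemma cabsV x : cabs (x^-1) = (cabs x)^-1.
Proof. exact: Normc.normcV. Qed.
Lemma cabs_eq0 x : cabs x = 0 -> x = 0.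
Proof. exact: Normc.eq0_normc. Qed.
Lemma cabsB x y : cabs (x - y) = cabs (y - x).
Proof. by rewrite -cabsN opprB. Qed.
Lemma cabsB_le x y : cabs (x - y) <= cabs x + cabs y.
Proof. by rewrite -(cabsN y); exact: cabsD. Qed.

Lemma prod_le (r : seq R[i]) (f : R[i] -> R[i]) (c : R) : 0 <= c ->
  (forall a, a \in r -> cabs (f a) <= c) -> cabs (\prod_(a <- r) f a) <= c ^+ size r.
Proof.
move=> c0; elim: r => [|a r IH] H; first by rewrite big_nil expr0 /cabs /= expr0n /= expr1n addr0 sqrtr1.
rewrite big_cons cabsM /= exprS; apply: ler_pM; rewrite ?cabs_ge0 //.
  by apply: H; rewrite mem_head.
by apply: IH => b Hb; apply: H; rewrite in_cons Hb orbT.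
Qed.

Lemma prod_ge (r : seq R[i]) (f : R[i] -> R[i]) (c : R) : 0 <= c ->
  (forall a, a \in r -> c <= cabs (f a)) -> c ^+ size r <= cabs (\prod_(a <- r) f a).
Proof.
move=> c0; elim: r => [|a r IH] H; first by rewrite big_nil expr0 /cabs /= expr0n /= expr1n addr0 sqrtr1.
rewrite big_cons cabsM /= exprS; apply: ler_pM; rewrite ?exprn_ge0 //.
  by apply: H; rewrite mem_head.
by apply: IH => b Hb; apply: H; rewrite in_cons Hb orbT.
Qed.

Lemma prod_lip (r : seq R[i]) (f g : R[i] -> R[i]) (e : R) : 0 <= e ->
  (forall a, a \in r -> [/\ cabs (f a) <= 2, cabs (g a) <= 2 & cabs (f a - g a) <= e]) ->
  cabs (\prod_(a <- r) f a - \prod_(a <- r) g a) <= (size r)%:R * 2 ^+ size r * e.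
Proof.
move=> e0; elim: r => [|a r IH] H.
  by rewrite !big_nil subrr /cabs /= expr0n /= addr0 sqrtr0 mul0r mul0r.
have [Hf Hg He] := H a (mem_head _ _).
have H' : forall b, b \in r -> [/\ cabs (f b) <= 2, cabs (g b) <= 2 & cabs (f b - g b) <= e].
  by move=> b Hb; apply: H; rewrite in_cons Hb orbT.
have IH' := IH H'.
have HG : cabs (\prod_(b <- r) g b) <= 2 ^+ size r.
  by apply: prod_le => // b Hb; have [] := H' b Hb.
rewrite !big_cons.
set F := \prod_(b <- r) f b; set G := \prod_(b <- r) g b.
have -> : f a * F - g a * G = f a * (F - G) + (f a - g a) * G by ring.
apply: (le_trans (cabsD _ _)); rewrite !cabsM /=.
set n := size r.
have h1 : cabs (f a) * cabs (F - G) <= 2 * (n%:R * 2 ^+ n * e).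
  by apply: ler_pM; rewrite ?cabs_ge0.
have h2 : cabs (f a - g a) * cabs G <= e * 2 ^+ n.
  by apply: ler_pM; rewrite ?cabs_ge0.
have hp : 0 <= (2:R) ^+ n by rewrite exprn_ge0.
have hn : 0 <= (n%:R : R) by rewrite ler0n.
rewrite exprS -natr1.
have : 0 <= 2 ^+ n * e by rewrite mulr_ge0.
have : 0 <= n%:R * (2 ^+ n * e) by rewrite mulr_ge0 // mulr_ge0.
set u := 2 ^+ n; set v := (n%:R : R).
move: h1 h2; rewrite /u /v; set U := (2:R) ^+ n; set V := (n%:R : R).
nra.
Qed.

Lemma cabs0 : cabs (0 : R[i]) = 0.
Proof. exact: Normc.normc0. Qed.

Lemma inv_le (m y : R) : 0 < m -> m <= y -> y^-1 <= m^-1.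
Proof. move=> m0 my; have y0 : 0 < y by apply: lt_le_trans my. by rewrite lef_pV2 // posrE. Qed.

Lemma vnorm_comb (n : nat) (u p q : 'I_n -> R[i]) (A B : R) : 0 <= A -> 0 <= B ->
  (forall k, cabs (u k) <= A * cabs (p k) + B * cabs (q k)) ->
  vnorm u <= 2 * A * vnorm p + 2 * B * vnorm q.
Proof.
move=> A0 B0 H; rewrite /vnorm.
set SP := \sum_(k < n) cabs (p k) ^+ 2; set SQ := \sum_(k < n) cabs (q k) ^+ 2.
have SP0 : 0 <= SP by apply: sumr_ge0 => k _; rewrite sqr_ge0.
have SQ0 : 0 <= SQ by apply: sumr_ge0 => k _; rewrite sqr_ge0.
have eP := sqr_sqrtr SP0; have eQ := sqr_sqrtr SQ0.
have sP0 := sqrtr_ge0 SP; have sQ0 := sqrtr_ge0 SQ.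
set sP := Num.sqrt SP in eP sP0 *; set sQ := Num.sqrt SQ in eQ sQ0 *.
have Hs : \sum_(k < n) cabs (u k) ^+ 2 <= 2 * A ^+ 2 * SP + 2 * B ^+ 2 * SQ.
  rewrite /SP /SQ !mulr_sumr -big_split /=; apply: ler_sum => k _.
  set a := cabs (p k); set b := cabs (q k); set c := cabs (u k).
  have c0 : 0 <= c by apply: cabs_ge0.
  have h1 : c ^+ 2 <= (A * a + B * b) ^+ 2.
    by rewrite !expr2; apply: ler_pM => //; apply: H.
  apply: (le_trans h1); have := sqr_ge0 (A * a - B * b); rewrite !expr2; lra.
have T0 : 0 <= 2 * A * sP + 2 * B * sQ by nra.
rewrite -(ger0_norm T0) -sqrtr_sqr ler_sqrt; last by rewrite sqr_ge0.
apply: (le_trans Hs); rewrite -eP -eQ.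
have h : 0 <= A * sP * (B * sQ) by rewrite !mulr_ge0.
rewrite !expr2; nra.
Qed.

Lemma poly_uniq (d : nat) (x : 'I_d.+1 -> R[i]) (p : {poly R[i]}) :
  injective x -> (size p <= d.+1)%N -> (forall j, p.[x j] = 0) -> p = 0.
Proof.
move=> Hi Hs Hr; apply/eqP; apply: contraT => nz.
have := max_poly_roots nz (rs := map x (enum 'I_d.+1)).
rewrite size_map size_enum_ord map_inj_uniq // enum_uniq.
have -> : all (root p) (map x (enum 'I_d.+1)).
  by apply/allP => z /mapP [j _ ->]; apply/rootP.
by move=> /(_ isT isT); rewrite ltnNge Hs.
Qed.

End Aux.
Arguments cabs_ge0 {R}.
Arguments cabsM {R}.
Arguments cabsD {R}.
Arguments cabsN {R}.
Arguments cabsV {R}.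
Arguments cabs_eq0 {R}.
Arguments cabsB {R}.
Arguments cabsB_le {R}.
Arguments prod_le {R}.
Arguments prod_ge {R}.
Arguments prod_lip {R}.
Arguments cabs0 {R}.
Arguments inv_le {R}.
Arguments vnorm_comb {R}.
Arguments poly_uniq {R}.
Unset Implicit Arguments.

Theorem lemma6p2 (R : realType) (d : nat) (gamma : R) :
  (1 <= d)%N -> 0 < gamma ->
  exists L0 L1 : R,
  forall (n : nat) (x : 'I_d.+1 -> R[i]) (w0 w1 : 'I_n -> R[i])
         (P : 'I_n -> {poly R[i]}),
    (forall j, in_disk (x j)) ->
    injective x ->
    cabs (x (inord 0) - x (inord 1)) <= gamma ->
    (forall (j : 'I_d.+1) (t : R), (2 <= j)%N -> 0 <= t <= 1 ->
        2 * gamma <= cabs (x j - seg_pt (x (inord 0)) (x (inord 1)) t)) ->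
    (forall k, (size (P k) <= d.+1)%N) ->
    (forall k, (P k).[x (inord 0)] = w0 k) ->
    (forall k, (P k).[x (inord 1)] = w1 k) ->
    (forall (j : 'I_d.+1) k, (2 <= j)%N -> (P k).[x j] = 0) ->
    forall zeta : R[i], in_disk zeta ->
      vnorm (fun k => (P k).[zeta])
        <= L1 * vnorm (fun k => (w1 k - w0 k) / (x (inord 1) - x (inord 0)))
           + L0 * vnorm w0.
Proof.
move=> d1 g0.
set m := (2 * gamma) ^+ d.-1.
set K := ((d.-1)%:R * 2 ^+ d.-1 : R).
have g20 : 0 <= 2 * gamma by rewrite mulr_ge0 // ltW.
have m0 : 0 < m by rewrite exprn_gt0 // mulr_gt0.
have K0 : 0 <= K by rewrite mulr_ge0 ?ler0n ?exprn_ge0.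
set A := 2 ^+ d.-1 * 2 / m.
set B := 2 ^+ d.-1 * (m^-1 + 2 * (K / (m * m))).
have A0 : 0 <= A by rewrite !mulr_ge0 ?exprn_ge0 ?invr_ge0 ?ltW.
have mi : 0 <= m^-1 by rewrite invr_ge0 ltW.
have Km : 0 <= K / (m * m) by rewrite divr_ge0 // mulr_ge0 // ltW.
have B0 : 0 <= B by rewrite /B mulr_ge0 ?exprn_ge0 //; lra.
exists (2 * B), (2 * A).
move=> n x w0 w1 P Hd Hinj H01 Hseg HP Hw0 Hw1 Hz zeta Hzeta.
apply: vnorm_comb => // k.
set x0 := x (inord 0); set x1 := x (inord 1).
set rs := [seq x (@inord d j) | j <- iota 2 d.-1].
have Hrs : forall r, r \in rs ->
    [/\ cabs r < 1, 2 * gamma <= cabs (x0 - r) & 2 * gamma <= cabs (x1 - r)].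
  move=> r /mapP [j]; rewrite mem_iota => /andP [j2 jd] ->.
  have jv : (2 <= @inord d j)%N by rewrite inordK //; lia.
  split; first exact: Hd.
  - have := Hseg _ 0 jv; rewrite lexx ler01 => /(_ isT).
    by rewrite /seg_pt rmorph0 mul0r addr0 cabsB.
  - have := Hseg _ 1 jv; rewrite lexx ler01 => /(_ isT).
    by rewrite /seg_pt rmorph1 mul1r [x0 + _]addrC subrK cabsB.
set Q := \prod_(r <- rs) ('X - r%:P).
have QE : forall z, Q.[z] = \prod_(r <- rs) (z - r).
  by move=> z; rewrite horner_prod; apply: eq_bigr => r _; rewrite hornerXsubC.
have srs : size rs = d.-1 by rewrite size_map size_iota.
have HQ0 : m <= cabs Q.[x0].
  by rewrite QE /m -srs; apply: prod_ge => // r /Hrs [].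
have HQ1 : m <= cabs Q.[x1].
  by rewrite QE /m -srs; apply: prod_ge => // r /Hrs [].
have Hz2 : forall z, cabs z < 1 -> forall r, r \in rs -> cabs (z - r) <= 2.
  move=> z hz r /Hrs [hr _ _]; have := cabsB_le z r; lra.
have HQz : cabs Q.[zeta] <= 2 ^+ d.-1.
  by rewrite QE -srs; apply: prod_le => // r /Hz2; apply.
have HQl : cabs (Q.[x0] - Q.[x1]) <= K * cabs (x0 - x1).
  rewrite !QE /K -srs; apply: prod_lip; first exact: cabs_ge0.
  move=> r hr; split; [exact: Hz2 (Hd _) _ hr | exact: Hz2 (Hd _) _ hr |].
  by have -> : x0 - r - (x1 - r) = x0 - x1 by ring.
have x10 : x1 - x0 != 0.
  apply/eqP => /subr0_eq E; have := congr1 val (Hinj _ _ E); rewrite /=.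
  by rewrite !inordK //; lia.
have Q0nz : Q.[x0] != 0.
  by apply/eqP => E; move: HQ0; rewrite E cabs0; lra.
have Q1nz : Q.[x1] != 0.
  by apply/eqP => E; move: HQ1; rewrite E cabs0; lra.
rewrite /=.
set Q0 := Q.[x0]; set Q1 := Q.[x1].
set D := (w1 k - w0 k) / (x1 - x0).
set c := (Q0 - Q1) / (Q0 * Q1 * (x1 - x0)).
set a := w0 k / Q0.
set b := D / Q1 + w0 k * c.
set L := Q * (a%:P + ('X - x0%:P) * b%:P).
have LE : forall z, L.[z] = Q.[z] * (a + (z - x0) * b).
  by move=> z; rewrite /L hornerM hornerD hornerC hornerM hornerXsubC hornerC.
have PL : P k = L.
  apply: subr0_eq; apply: (@poly_uniq _ d x); first exact: Hinj.
  - apply: leq_trans (size_polyD (P k) (- L)) _.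
    rewrite size_polyN geq_max HP /=.
    have sQ : size Q = d by rewrite /Q size_prod_XsubC srs prednK.
    have s2 : (size (a%:P + ('X - x0%:P) * b%:P)%R <= 2)%N.
      apply: leq_trans (size_polyD a%:P (('X - x0%:P) * b%:P)) _.
      rewrite geq_max size_polyC.
      apply/andP; split; first by case: (a != 0).
      apply: leq_trans (size_polyMleq ('X - x0%:P) b%:P) _.
      rewrite size_XsubC size_polyC.
      by case: (b != 0).
    rewrite /L; apply: leq_trans (size_polyMleq Q (a%:P + ('X - x0%:P) * b%:P)) _.
    rewrite sQ; apply: (@leq_trans (d + 2).-1); last by rewrite addn2.
    by rewrite -!subn1 leq_sub2r // leq_add2l.
  move=> j; rewrite hornerD hornerN LE.
  have [j0|j0] := eqVneq (val j) 0%N.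
    have -> : j = inord 0 by apply: val_inj; rewrite /= inordK // j0.
    rewrite Hw0 -/x0 -/Q0 /a; field; exact: Q0nz.
  have [j1|j1] := eqVneq (val j) 1%N.
    have -> : j = inord 1 by apply: val_inj; rewrite /= inordK // j1.
    rewrite Hw1 -/x1 -/Q1 /a /b /D /c; field.
    by rewrite Q0nz Q1nz x10.
  have j2 : (2 <= j)%N.
    move: j0 j1 => /=; case: (nat_of_ord j) => [|[|]] //.
  have Qj : Q.[x j] = 0.
    apply/rootP; rewrite root_prod_XsubC; apply/mapP; exists (val j).
      by rewrite mem_iota j2 /= add2n prednK //; exact: ltn_ord.
    by rewrite inord_val.
  by rewrite Hz // Qj mul0r subrr.
rewrite PL LE.
set Qz := Q.[zeta].
have -> : Qz * (a + (zeta - x0) * b)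
   = (Qz * (zeta - x0) / Q1) * D + (Qz * (Q0^-1 + (zeta - x0) * c)) * w0 k.
  rewrite /a /b; field; by rewrite Q0nz Q1nz.
apply: le_trans (cabsD _ _) _; rewrite [cabs (_ * D)]cabsM [cabs (_ * w0 k)]cabsM.
have hz0 : cabs (zeta - x0) <= 2.
  have h1 := cabsB_le zeta x0; have h2 : cabs x0 < 1 by exact: Hd.
  have h3 : cabs zeta < 1 by exact: Hzeta.
  lra.
have iq0 := inv_le _ _ m0 HQ0; have iq1 := inv_le _ _ m0 HQ1.
apply: lerD; apply: ler_wpM2r; rewrite ?cabs_ge0 //.
  rewrite /A cabsM cabsV; apply: ler_pM; rewrite ?invr_ge0 ?cabs_ge0 ?mulr_ge0 ?cabs_ge0 //.
  by rewrite cabsM; apply: ler_pM; rewrite ?cabs_ge0.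
rewrite /B cabsM; apply: ler_pM; rewrite ?cabs_ge0 //.
apply: le_trans (cabsD _ _) _; rewrite cabsV cabsM; apply: lerD => //.
apply: ler_pM; rewrite ?cabs_ge0 //.
have t0 : 0 < cabs (x1 - x0).
  rewrite lt_def cabs_ge0 andbT; apply/negP => /eqP /cabs_eq0 E; by rewrite E eqxx in x10.
have e1 : cabs (Q0 - Q1) / cabs (x1 - x0) <= K.
  by rewrite ler_pdivrMr // (cabsB x1 x0); exact: HQl.
rewrite /c cabsM cabsV !cabsM !invfM.
have -> : cabs (Q0 - Q1) * ((cabs Q0)^-1 * (cabs Q1)^-1 * (cabs (x1 - x0))^-1)
  = (cabs (Q0 - Q1) / cabs (x1 - x0)) * ((cabs Q0)^-1 * (cabs Q1)^-1) by ring.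
apply: ler_pM; rewrite ?divr_ge0 ?cabs_ge0 ?mulr_ge0 ?invr_ge0 ?cabs_ge0 //.
by apply: ler_pM; rewrite ?invr_ge0 ?cabs_ge0.
Qed.
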